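(* Let $\mathcal{O}$ be a complete discrete valuation ring with field of fractions $K$. Consider the game of degree $d = 3$ in which Nora and Wanda choose the polynomial coefficients from $\mathcal{O}$. Then Wanda has a winning strategy (whether she moves first or second), i.e. she can always ensure that the final polynomial has a root in $K$.
   Context: The game: Nora and Wanda alternately choose coefficients of $f(x) = a_3 x^3 + a_2 x^2 + a_1 x + a_0$; on each move the current player picks a not-yet-chosen coefficient and assigns it a value in $\mathcal{O}$, subject to $a_3 \neq 0$, $a_0 \neq 0$. After all four coefficients are chosen, Wanda wins if $f$ has a root in $K = \operatorname{Frac}(\mathcal{O})$, and Nora wins otherwise. *)

(* Defs.v *)
From HB Require Import structures.
From mathcomp Require Import all_boot all_order all_algebra.
Set Implicit Arguments. Unset Strict Implicit. Unset Printing Implicit Defensive.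
Import Order.TTheory GRing.Theory Num.Theory.
Local Open Scope ring_scope.

(* A discrete valuation on the integral domain O, defined on nonzero
   elements (its value on 0 is irrelevant), normalized (a uniformizer has
   valuation 1), and such that O is its full valuation ring: whenever
   v a <= v b, a divides b in O.  Together these say exactly that O is a
   discrete valuation ring with normalized valuation v. *)
Record is_dvr (O : idomainType) (v : O -> nat) : Prop := {
  dvr_mul : forall a b : O, a != 0 -> b != 0 -> v (a * b) = (v a + v b)%N;
  dvr_add : forall a b : O, a != 0 -> b != 0 -> (a + b)%R != 0%R ->
              (minn (v a) (v b) <= v (a + b)%R)%N;
  dvr_unif : exists p : O, p != 0 /\ v p = 1%N;
  dvr_div : forall a b : O, a != 0 -> b != 0 -> (v a <= v b)%N ->
              exists c : O, b = a * c
}.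

(* x lies in m^N, m the maximal ideal *)
Definition in_mpow (O : idomainType) (v : O -> nat) (N : nat) (x : O) : Prop :=
  x = 0 \/ (N <= v x)%N.

Definition dvr_complete (O : idomainType) (v : O -> nat) : Prop :=
  forall u : nat -> O,
    (forall N, exists M, forall m n, (M <= m)%N -> (M <= n)%N ->
        in_mpow v N (u m - u n)) ->
    exists l : O, forall N, exists M, forall n, (M <= n)%N ->
        in_mpow v N (u n - l).

Definition is_complete_dvr (O : idomainType) (v : O -> nat) : Prop :=
  is_dvr v /\ dvr_complete v.

Definition gstate (O : idomainType) := 'I_4 -> option O.

Definition legal_move (O : idomainType) (s : gstate O) (i : 'I_4) (c : O) : Prop :=
  s i = None /\ (((i == 0 :> nat) || (i == 3 :> nat)) -> c != 0).

Definition play (O : idomainType) (s : gstate O) (i : 'I_4) (c : O) : gstate O :=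
  fun j => if j == i then Some c else s j.

Definition final_poly (O : idomainType) (s : gstate O) : {poly {fraction O}} :=
  \poly_(i < 4) (tofrac (odflt 0 (s (inord i)))).

Definition wanda_wins_final (O : idomainType) (s : gstate O) : Prop :=
  exists x : {fraction O}, root (final_poly s) x.

(* wanda_can_win n s w : from state s with n moves remaining, where w says
   whether it is Wanda's turn, Wanda has a strategy guaranteeing a win.
   (Standard backward-induction formulation of "has a winning strategy" for
   a finite game of perfect information.) *)
Fixpoint wanda_can_win (O : idomainType) (n : nat) (s : gstate O) (w : bool) : Prop :=
  match n with
  | 0%N => wanda_wins_final s
  | n'.+1 =>
      if w then exists i c, legal_move s i c /\ wanda_can_win n' (play s i c) false
      else forall i c, legal_move s i c -> wanda_can_win n' (play s i c) true
  end.

Definition empty_state (O : idomainType) : gstate O := fun _ => None.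

(* Main.v *)
Require Import Defs.
From mathcomp Require Import all_boot all_order all_algebra.
From mathcomp Require Import ring zify.
From Stdlib Require Import Classical.
Set Implicit Arguments. Unset Strict Implicit. Unset Printing Implicit Defensive.
Import Order.TTheory GRing.Theory Num.Theory.
Local Open Scope ring_scope.
Section S.
Variable O : idomainType.
Local Notation "x %:F" := (@FracField.tofrac O x).
Definition A (s : gstate O) (k : nat) : O := odflt 0 (s (inord k)).
Lemma final_eval (s : gstate O) (x : {fraction O}) :
  (final_poly s).[x] = (A s 0)%:F + (A s 1)%:F * x + (A s 2)%:F * x^+2 + (A s 3)%:F * x^+3.
Proof.
rewrite /final_poly horner_poly !big_ord_recl big_ord0 /A /=.
rewrite /bump /= expr0 expr1 mulr1 addr0 !addrA.
reflexivity.
Qed.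

Lemma final_root (s : gstate O) (x : O) :
  A s 0 + A s 1 * x + A s 2 * x^+2 + A s 3 * x^+3 = 0 -> wanda_wins_final s.
Proof.
move=> H; exists x%:F; apply/eqP; rewrite final_eval -!tofracXn -!tofracM -!tofracD H.
exact: tofrac0.
Qed.

Lemma final_root_inv (s : gstate O) (y : O) : y != 0 ->
  A s 3 + A s 2 * y + A s 1 * y^+2 + A s 0 * y^+3 = 0 -> wanda_wins_final s.
Proof.
move=> y0 H; exists (y%:F)^-1; apply/eqP; rewrite final_eval.
have yF : y%:F != 0 by rewrite tofrac_eq0.
apply: (@mulIf _ (y%:F ^+ 3)); first by rewrite expf_neq0.
set z := y%:F.
have e3 : z ^+ 3 = z * (z * z) by rewrite !exprS expr0 mulr1.
rewrite mul0r !mulrDl -!mulrA e3 !(mulKf yF).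
rewrite mulVf // mulr1.
have Hf : (A s 3 + A s 2 * y + A s 1 * y ^+ 2 + A s 0 * y ^+ 3)%:F = 0 by rewrite H tofrac0.
rewrite !rmorphD !rmorphM in Hf.
rewrite -[RHS]Hf /z /=. ring.
Qed.

Lemma play_A (s : gstate O) r c k : (r < 4)%N -> (k < 4)%N ->
  A (play s (inord r) c) k = if k == r then c else A s k.
Proof.
move=> hr hk; rewrite /A /play.
have -> : ((inord k : 'I_4) == inord r) = (k == r).
  apply/eqP/eqP => [E|->//].
  by move: (congr1 val E); rewrite /= !inordK.
by case: (k == r).
Qed.


Variable v : O -> nat.
Hypothesis hv : is_dvr v.
Hypothesis hc : dvr_complete v.
Local Notation m := (in_mpow v).

Lemma v1 : v 1 = 0%N.
Proof. have := dvr_mul hv (oner_neq0 O) (oner_neq0 O); rewrite mulr1 -{1}[v 1]addn0 => /eqP; rewrite eqn_add2l eq_sym => /eqP. by []. Qed.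

Lemma vN1 : v (-1) = 0%N.
Proof.
have n1 : (-1 : O) != 0 by rewrite oppr_eq0 oner_neq0.
have := dvr_mul hv n1 n1; rewrite mulrNN mulr1 v1 => /eqP; by rewrite eq_sym addn_eq0 => /andP[/eqP].
Qed.

Lemma m0 N : m N 0. Proof. by left. Qed.
Lemma mO x : m 0 x. Proof. by right. Qed.

Lemma mD N x y : m N x -> m N y -> m N (x + y).
Proof.
case=> [->|hx]; first by rewrite add0r.
case=> [->|hy]; first by rewrite addr0; right.
case: (eqVneq (x + y) 0) => [->|nz]; first by left.
right; case: (eqVneq x 0) => [E|x0'].
  by rewrite E add0r.
case: (eqVneq y 0) => [E|y0]; first by rewrite E addr0.
apply: leq_trans (dvr_add hv x0' y0 nz); rewrite leq_min hx hy.
done.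
Qed.

Lemma mM N M x y : m N x -> m M y -> m (N + M) (x * y).
Proof.
case=> [->|hx]; first by rewrite mul0r; left.
case=> [->|hy]; first by rewrite mulr0; left.
case: (eqVneq x 0) => [->|x0]; first by rewrite mul0r; left.
case: (eqVneq y 0) => [->|y0]; first by rewrite mulr0; left.
right; rewrite (dvr_mul hv x0 y0); exact: leq_add.
Qed.

Lemma mMr N x y : m N x -> m N (x * y).
Proof. by move=> h; have := mM h (mO y); rewrite addn0. Qed.

Lemma mMl N x y : m N y -> m N (x * y).
Proof. by rewrite mulrC; apply: mMr. Qed.

Lemma mN N x : m N x -> m N (- x).
Proof. by move=> h; rewrite -mulN1r; apply: mMl. Qed.

Lemma mB N x y : m N x -> m N y -> m N (x - y).
Proof. by move=> hx hy; apply: mD => //; apply: mN. Qed.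

Lemma mW N M x : (N <= M)%N -> m M x -> m N x.
Proof. move=> le [->|h]; [by left| right; exact: leq_trans h]. Qed.

Lemma mall x : (forall N, m N x) -> x = 0.
Proof. move=> h; case: (h (v x).+1) => // /=; by rewrite ltnn. Qed.

Lemma contraction (T : O -> O) :
  (forall N x y, m N (x - y) -> m N.+1 (T x - T y)) -> exists l, T l = l.
Proof.
move=> hT.
pose u n := iter n T 0.
have D n : m n (u n.+1 - u n).
  elim: n => [|n IH]; first exact: mO.
  exact: (hT _ _ _ IH).
have C M n : (M <= n)%N -> m M (u n - u M).
  elim: n => [|n IH]; first by rewrite leqn0 => /eqP ->; rewrite subrr; left.
  rewrite leq_eqVlt => /orP [/eqP <-|lt]; first by rewrite subrr; left.
  have -> : u n.+1 - u M = (u n.+1 - u n) + (u n - u M) by rewrite addrA subrK.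
  apply: mD; last exact: IH.
  exact: mW (D n).
have [l hl] : exists l, forall N, exists M, forall n, (M <= n)%N -> m N (u n - l).
  apply: hc => N; exists N => a b ha hb.
  have -> : u a - u b = (u a - u N) - (u b - u N) by ring.
  by apply: mB; apply: C.
exists l; apply/eqP; rewrite -subr_eq0; apply/eqP; apply: mall => N.
have [M hM] := hl N.
have -> : T l - l = (u M.+1 - l) - (T (u M) - T l) by rewrite /=; ring.
apply: mB; first exact: hM.
apply: mW (hT _ _ _ (hM M (leqnn M))); exact: leqnSn.
Qed.

Lemma coreC c0 c2 c3 : m 1 c2 -> m 1 c3 ->
  exists x, c0 + x + c2 * x ^+ 2 + c3 * x ^+ 3 = 0.
Proof.
move=> h2 h3.
pose T := fun x => - (c0 + c2 * x ^+ 2 + c3 * x ^+ 3).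
have hT : forall N x y, m N (x - y) -> m N.+1 (T x - T y).
  move=> N x y hxy.
  have -> : T x - T y
     = - ((x - y) * (c2 * (x + y) + c3 * (x * x + x * y + y * y))) by rewrite /T; ring.
  apply: mN; rewrite -addn1; apply: mM => //.
  by apply: mD; apply: mMr.
have [l hl] := contraction hT.
exists l; rewrite -{1}hl /T. ring.
Qed.

Lemma unif : exists p : O, p != 0 /\ v p = 1%N.
Proof. exact: dvr_unif hv. Qed.

Lemma L1 c0 c2 c3 : m 1 c0 -> exists x, c0 + x + c2 * x ^+ 2 + c3 * x ^+ 3 = 0.
Proof.
move=> hm; case: (eqVneq c0 0) => [->|c00]; first by exists 0; ring.
have h0 : (1 <= v c0)%N by case: hm => // E; rewrite E eqxx in c00.
have [p [p0 vp]] := unif.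
have [d hd] : exists d, c0 = p * d by apply: (dvr_div hv p0 c00); rewrite vp.
have mp : m 1 p by right; rewrite vp.
have [y hy] := @coreC d (p * c2) (p * p * c3) (mMr _ mp) (mMr _ (mMr _ mp)).
exists (p * y); rewrite hd.
have -> : p * d + p * y + c2 * (p * y) ^+ 2 + c3 * (p * y) ^+ 3
  = p * (d + y + p * c2 * y ^+ 2 + p * p * c3 * y ^+ 3) by ring.
by rewrite hy mulr0.
Qed.

Lemma unit_of a : ~ m 1 a -> exists e, a * e = 1.
Proof.
move=> h.
have a0 : a != 0 by apply/eqP => E; apply: h; left.
have va : (v a <= v 1)%N by rewrite v1 leqn0; apply/negPn/negP => hn; apply: h; right; rewrite lt0n.
have [e he] := dvr_div hv a0 (oner_neq0 O) va.
by exists e.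
Qed.

Lemma rootA a0 a2 p : p != 0 -> m 1 p ->
  (exists x, a0 + x + a2 * x ^+ 2 + p * x ^+ 3 = 0) \/
  (exists y, y != 0 /\ p + a2 * y + y ^+ 2 + a0 * y ^+ 3 = 0).
Proof.
move=> p0 mp.
have [h2|h2] := classic (m 1 a2).
  by left; apply: coreC.
right; have [e he] := unit_of h2.
have [y hy] := @L1 (e * p) e (e * a0) (mMl _ mp).
exists y; split.
  apply/eqP => E; move: hy; rewrite E !expr0n /= !mulr0 !addr0 => /eqP.
  rewrite mulf_eq0 (negbTE p0) orbF => /eqP e0.
  by move: he; rewrite e0 mulr0 => /eqP; rewrite eq_sym oner_eq0.
have -> : p + a2 * y + y ^+ 2 + a0 * y ^+ 3 =
   (a2 * e) * p + a2 * y + (a2 * e) * y ^+ 2 + (a2 * e) * a0 * y ^+ 3 by rewrite he; ring.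
have -> : (a2 * e) * p + a2 * y + (a2 * e) * y ^+ 2 + (a2 * e) * a0 * y ^+ 3 =
   a2 * (e * p + y + e * y ^+ 2 + e * a0 * y ^+ 3) by ring.
by rewrite hy mulr0.
Qed.

Lemma ttrick b0 b1 b2 : b2 != 0 ->
  exists t : O, t != 0 /\ t * (b0 + b1 * t + b2 * t ^+ 2) != 0.
Proof.
move=> b20.
have [p [p0 vp]] := unif.
pose q (t : O) := b0 + b1 * t + b2 * t ^+ 2.
have p1 : 1 - p != 0.
  by rewrite subr_eq0; apply/eqP => E; move: vp; rewrite -E v1.
have pp1 : 1 - p * p != 0.
  rewrite subr_eq0; apply/eqP => E; move: vp; have := dvr_mul hv p0 p0.
  by rewrite -E v1 => /esym /eqP; rewrite addn_eq0 => /andP [/eqP ->].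
have pp : p - p * p != 0 by rewrite -{1}[p]mulr1 -mulrBr mulf_neq0.
have pp0 : p * p != 0 by rewrite mulf_neq0.
case: (eqVneq (q 1) 0) => [q1|q1]; last first.
  by exists 1; rewrite mul1r oner_neq0.
case: (eqVneq (q p) 0) => [qp|qp]; last first.
  by exists p; rewrite mulf_neq0.
case: (eqVneq (q (p * p)) 0) => [qpp|qpp]; last first.
  by exists (p * p); rewrite mulf_neq0.
have e1 : (1 - p) * (b1 + b2 * (1 + p)) = 0.
  rewrite -[RHS](subrr 0) -{1}q1 -qp /q; ring.
have e2 : (p - p * p) * (b1 + b2 * (p + p * p)) = 0.
  rewrite -[RHS](subrr 0) -{1}qp -qpp /q; ring.
move/eqP: e1; rewrite mulf_eq0 (negbTE p1) /= => /eqP e1.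
move/eqP: e2; rewrite mulf_eq0 (negbTE pp) /= => /eqP e2.
have : b2 * (1 - p * p) = 0.
  rewrite -[RHS](subrr 0) -{1}e1 -e2; ring.
by move/eqP; rewrite mulf_eq0 (negbTE b20) (negbTE pp1).
Qed.


Lemma inord_eq k r : (k < 4)%N -> (r < 4)%N -> ((inord k : 'I_4) == inord r) = (k == r).
Proof.
move=> hk hr; apply/eqP/eqP => [E|->//].
by move: (congr1 val E); rewrite /= !inordK.
Qed.

Lemma persist (s : gstate O) i c j a : legal_move s i c -> s j = Some a -> play s i c j = Some a.
Proof.
move=> [hi _] hj; rewrite /play; case: eqP => // E.
by rewrite E hi in hj.
Qed.

Definition NZ (s : gstate O) := forall j a, s j = Some a -> ((j == 0 :> nat) || (j == 3 :> nat)) -> a != 0.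

Lemma NZ_play s i c : NZ s -> legal_move s i c -> NZ (play s i c).
Proof.
move=> hs [_ hci] j a; rewrite /play; case: eqP => [-> [<-]|_]; first exact: hci.
exact: hs.
Qed.

Lemma A_some (s : gstate O) k a : s (inord k) = Some a -> A s k = a.
Proof. by rewrite /A => ->. Qed.

Lemma A_none (s : gstate O) k : s (inord k) = None -> A s k = 0.
Proof. by rewrite /A => ->. Qed.

Lemma last_move (s : gstate O) : NZ s -> (exists j, s j = None) ->
  exists i c, legal_move s i c /\ wanda_wins_final (play s i c).
Proof.
move=> hs [j hj].
case E1: (s (inord 1)) => [a1|].
case E2: (s (inord 2)) => [a2|].
case E0: (s (inord 0)) => [a0|]; case E3: (s (inord 3)) => [a3|].
- exfalso.
  case: j hj => [[|[|[|[|//]]]] hj0] hj.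
  + by rewrite (_ : Ordinal hj0 = inord 0) ?E0 // in hj; apply: val_inj; rewrite /= inordK.
  + by rewrite (_ : Ordinal hj0 = inord 1) ?E1 // in hj; apply: val_inj; rewrite /= inordK.
  + by rewrite (_ : Ordinal hj0 = inord 2) ?E2 // in hj; apply: val_inj; rewrite /= inordK.
  + by rewrite (_ : Ordinal hj0 = inord 3) ?E3 // in hj; apply: val_inj; rewrite /= inordK.
- have a00 : a0 != 0 by apply: (hs _ _ E0); rewrite inordK.
  have a0' : A s 0 != 0 by rewrite (A_some E0).
  have [t [t0 ht]] := @ttrick (A s 2) (A s 1) (A s 0) a0'.
  exists (inord 3), (- (t * (A s 2 + A s 1 * t + A s 0 * t ^+ 2))); split.
    by split => // _; rewrite oppr_eq0.
  apply: (@final_root_inv _ t t0); rewrite !play_A //=; ring.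
- have a30 : a3 != 0 by apply: (hs _ _ E3); rewrite inordK.
  have a3' : A s 3 != 0 by rewrite (A_some E3).
  have [t [t0 ht]] := @ttrick (A s 1) (A s 2) (A s 3) a3'.
  exists (inord 0), (- (t * (A s 1 + A s 2 * t + A s 3 * t ^+ 2))); split.
    by split => // _; rewrite oppr_eq0.
  apply: (@final_root _ t); rewrite !play_A //=; ring.
- exists (inord 3), 1; split; first by split => // _; exact: oner_neq0.
  apply: (@final_root _ 0); rewrite !play_A //= (A_none E0); ring.
- exists (inord 2), (- (A s 0 + A s 1 + A s 3)); split.
    by split => //; rewrite inordK.
  apply: (@final_root _ 1); rewrite !play_A //=; ring.
- exists (inord 1), (- (A s 0 + A s 2 + A s 3)); split.
    by split => //; rewrite inordK.
  apply: (@final_root _ 1); rewrite !play_A //=; ring.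
Qed.


Lemma wanda_first : wanda_can_win 4 (empty_state O) true.
Proof.
have [p [p0 vp]] := unif.
have mp : m 1 p by right; rewrite vp.
rewrite /=.
exists (inord 1), 1; split; first by split => // _; exact: oner_neq0.
set s1 := play _ _ _.
have s11 : s1 (inord 1) = Some 1 by rewrite /s1 /play eqxx.
move=> i2 c2 l2; set s2 := play s1 i2 c2.
have s21 : s2 (inord 1) = Some 1 by apply: persist.
case E3: (s2 (inord 3)) => [a3|].
-
  have E0 : s2 (inord 0) = None.
    move: E3; rewrite /s2 /play /s1 /play.
    case: eqP => [<-|_]; last by rewrite inord_eq.
    by rewrite inord_eq // inord_eq.
  exists (inord 0), p; split; first by split => // _.
  set s3 := play s2 _ _.
  have s31 : s3 (inord 1) = Some 1 by apply: persist => //; split.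
  have s30 : s3 (inord 0) = Some p by rewrite /s3 /play eqxx.
  move=> i4 c4 l4.
  have s41 := persist l4 s31; have s40 := persist l4 s30.
  have [x hx] := @L1 p (A (play s3 i4 c4) 2) (A (play s3 i4 c4) 3) mp.
  apply: (@final_root _ x); by rewrite (A_some s41) (A_some s40) mul1r.
- exists (inord 3), p; split; first by split => // _.
  set s3 := play s2 _ _.
  have s31 : s3 (inord 1) = Some 1 by apply: persist => //; split.
  have s33 : s3 (inord 3) = Some p by rewrite /s3 /play eqxx.
  move=> i4 c4 l4.
  have s41 := persist l4 s31; have s43 := persist l4 s33.
  have [[x hx]|[y [y0 hy]]] := @rootA (A (play s3 i4 c4) 0) (A (play s3 i4 c4) 2) p p0 mp.
  + apply: (@final_root _ x); by rewrite (A_some s41) (A_some s43) mul1r.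
  + apply: (@final_root_inv _ y y0); by rewrite (A_some s41) (A_some s43) mul1r.
Qed.

Lemma wanda_second : wanda_can_win 4 (empty_state O) false.
Proof.
rewrite /= => i1 c1 l1.
set s1 := play _ _ _.
pose i2 : 'I_4 := if i1 == inord 0 then inord 1 else inord 0.
have ne : i2 != i1.
  rewrite /i2; case: (eqVneq i1 (inord 0)) => [->|ne]; first by rewrite inord_eq.
  by rewrite eq_sym.
have l2 : legal_move s1 i2 1.
  split; last by move=> _; exact: oner_neq0.
  by rewrite /s1 /play (negbTE ne).
exists i2, 1; split => // i3 c3 l3.
have ns1 : NZ s1 by apply: NZ_play => //; move=> j a.
apply: last_move.
  by apply: NZ_play => //; exact: NZ_play.
have [j hj] : exists j : 'I_4, j \notin [:: i1; i2; i3].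
  case: (pickP [pred j : 'I_4 | j \notin [:: i1; i2; i3]]) => [j hj|none]; first by exists j.
  exfalso.
  have : (#|'I_4| <= #|[:: i1; i2; i3]|)%N.
    apply: subset_leq_card; apply/subsetP => x _; move: (none x) => /= /negbFE.
    by [].
  rewrite card_ord => h; have := card_size [:: i1; i2; i3]; move: h.
  by move=> h1 h2; have := leq_trans h1 h2.
exists j; move: hj; rewrite !inE negb_or negb_or => /and3P [n1 n2 n3].
rewrite /play (negbTE n3) (negbTE n2) /s1 /play. case: eqP => // E; by rewrite E eqxx in n1.
Qed.

End S.

Local Close Scope ring_scope.
Theorem proposition3 (O : idomainType) (v : O -> nat) :
  is_complete_dvr v ->
  forall wanda_first : bool, wanda_can_win 4 (empty_state O) wanda_first.
Proof.
move=> [hv hc] [].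
- exact: (wanda_first hv hc).
- exact: (wanda_second hv).
Qed.
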